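(* Let $R \in \mathcal{R}$ and let $R^\perp = \bigcup\{X : X \text{ is a nice set and } R = X \to \mathcal{N}\}$. Then (1) $R^\perp$ is a nice set, and (2) $R = R^\perp \to \mathcal{N}$.
   Context: With disjoint sets of $\lambda$-variables $x,y,\dots$ and $\mu$-variables $a,b,\dots$, terms and $\mathcal{E}$-terms are $\mathcal{T} ::= x \mid \lambda x.\mathcal{T} \mid (\mathcal{T}\;\mathcal{E}) \mid \langle \mathcal{T},\mathcal{T}\rangle \mid \omega_1\mathcal{T} \mid \omega_2\mathcal{T} \mid \mu a.\mathcal{T} \mid (a\;\mathcal{T})$, $\mathcal{E} ::= \mathcal{T} \mid \pi_1 \mid \pi_2 \mid [x.\mathcal{T}, y.\mathcal{T}]$ (up to renaming of bound variables). The one-step reduction $\triangleright$ is the closure under all constructors of: $(\lambda x.u\;v)\triangleright u[x:=v]$; $(\langle t_1,t_2\rangle\;\pi_i)\triangleright t_i$; $(\omega_i t\;[x_1.u_1,x_2.u_2])\triangleright u_i[x_i:=t]$; $((t\;[x_1.u_1,x_2.u_2])\;\varepsilon)\triangleright(t\;[x_1.(u_1\;\varepsilon),x_2.(u_2\;\varepsilon)])$; $(\mu a.t\;\varepsilon)\triangleright\mu a.t[a:=^*\varepsilon]$, where $t[a:=^*\varepsilon]$ replaces inductively each subterm $(a\;v)$ by $(a\;(v\;\varepsilon))$. $\mathcal{N}$ (resp. $\mathcal{N}'$) is the set of strongly normalizable terms (resp. $\mathcal{E}$-terms), $\mathcal{N}'^{<\omega}$ the set of finite sequences of elements of $\mathcal{N}'$.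 For $\bar{w}=w_1\dots w_n$ and a term $t$, $(t\;\bar{w})$ is $t$ if $n=0$ and $((t\;w_1)\;w_2\dots w_n)$ otherwise. For $S\subseteq\mathcal{N}'^{<\omega}$ and a set of terms $K$, $S\to K=\{t\in\mathcal{T} : (t\;\bar{w})\in K \text{ for each } \bar{w}\in S\}$. A sequence $\bar{w}\in\mathcal{N}'^{<\omega}$ is nice iff none of $w_1,\dots,w_{n-1}$ is of the form $[x.u,y.v]$; a set $X\subseteq\mathcal{N}'^{<\omega}$ is nice iff all its elements are nice. For sets $K,L$ of terms: $K\to L=\{t : (t\;u)\in L \text{ for all } u\in K\}$; $K\wedge L=\{t : (t\;\pi_1)\in K, (t\;\pi_2)\in L\}$; $K\vee L=\{t :$ for all $\lambda$-variables $x,y$ and all $u,v\in\mathcal{N}$, if $u[x:=r]\in\mathcal{N}$ and $v[y:=s]\in\mathcal{N}$ for all $r\in K,s\in L$, then $(t\;[x.u,y.v])\in\mathcal{N}\}$. $\mathcal{R}$ is the smallest set of sets of terms containing $\mathcal{N}$ and closed under $\to,\wedge,\vee$. *)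

(* Defs.v *)
(* Terms of the lambda-mu calculus with pairs and sums,
   represented with de Bruijn indices (two separate index spaces: one for
   lambda-variables, one for mu-variables), so that terms are automatically
   identified up to renaming of bound variables. *)
From Stdlib Require Import List Arith.
Import ListNotations.

Inductive term : Type :=
| Var : nat -> term
| Lam : term -> term
| App : term -> eterm -> term
| Pair : term -> term -> term
| Inj1 : term -> term
| Inj2 : term -> term
| Mu : term -> term
| MuApp : nat -> term -> term
with eterm : Type :=
| ETm : term -> eterm
| Proj1 : eterm
| Proj2 : eterm
| Case : term -> term -> eterm.     (* [x.u, y.v]; each branch binds one lambda-variable *)

Fixpoint liftL (k : nat) (t : term) : term :=
  match t with
  | Var n => Var (if k <=? n then S n else n)
  | Lam u => Lam (liftL (S k) u)
  | App u e => App (liftL k u) (liftLe k e)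
  | Pair u v => Pair (liftL k u) (liftL k v)
  | Inj1 u => Inj1 (liftL k u)
  | Inj2 u => Inj2 (liftL k u)
  | Mu u => Mu (liftL k u)
  | MuApp a u => MuApp a (liftL k u)
  end
with liftLe (k : nat) (e : eterm) : eterm :=
  match e with
  | ETm u => ETm (liftL k u)
  | Proj1 => Proj1
  | Proj2 => Proj2
  | Case u v => Case (liftL (S k) u) (liftL (S k) v)
  end.

Fixpoint liftM (k : nat) (t : term) : term :=
  match t with
  | Var n => Var n
  | Lam u => Lam (liftM k u)
  | App u e => App (liftM k u) (liftMe k e)
  | Pair u v => Pair (liftM k u) (liftM k v)
  | Inj1 u => Inj1 (liftM k u)
  | Inj2 u => Inj2 (liftM k u)
  | Mu u => Mu (liftM (S k) u)
  | MuApp a u => MuApp (if k <=? a then S a else a) (liftM k u)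
  end
with liftMe (k : nat) (e : eterm) : eterm :=
  match e with
  | ETm u => ETm (liftM k u)
  | Proj1 => Proj1
  | Proj2 => Proj2
  | Case u v => Case (liftM k u) (liftM k v)
  end.

(* substL k v t : capture-avoiding substitution of v for the lambda-index k
   in t (v lives in the context of t at the current depth); free indices
   above k are decremented, since the binder of k disappears. *)
Fixpoint substL (k : nat) (v : term) (t : term) : term :=
  match t with
  | Var n => if n =? k then v else if k <? n then Var (pred n) else Var n
  | Lam u => Lam (substL (S k) (liftL 0 v) u)
  | App u e => App (substL k v u) (substLe k v e)
  | Pair u w => Pair (substL k v u) (substL k v w)
  | Inj1 u => Inj1 (substL k v u)
  | Inj2 u => Inj2 (substL k v u)
  | Mu u => Mu (substL k (liftM 0 v) u)
  | MuApp a u => MuApp a (substL k v u)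
  end
with substLe (k : nat) (v : term) (e : eterm) : eterm :=
  match e with
  | ETm u => ETm (substL k v u)
  | Proj1 => Proj1
  | Proj2 => Proj2
  | Case u w => Case (substL (S k) (liftL 0 v) u) (substL (S k) (liftL 0 v) w)
  end.

(* u[x := v] where x is the variable bound by the enclosing binder (index 0) *)
Definition subst0 (v : term) (u : term) : term := substL 0 v u.

Fixpoint msubst (a : nat) (e : eterm) (t : term) : term :=
  match t with
  | Var n => Var n
  | Lam u => Lam (msubst a (liftLe 0 e) u)
  | App u f => App (msubst a e u) (msubste a e f)
  | Pair u w => Pair (msubst a e u) (msubst a e w)
  | Inj1 u => Inj1 (msubst a e u)
  | Inj2 u => Inj2 (msubst a e u)
  | Mu u => Mu (msubst (S a) (liftMe 0 e) u)
  | MuApp b u =>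
      if b =? a then MuApp b (App (msubst a e u) e) else MuApp b (msubst a e u)
  end
with msubste (a : nat) (e : eterm) (f : eterm) : eterm :=
  match f with
  | ETm u => ETm (msubst a e u)
  | Proj1 => Proj1
  | Proj2 => Proj2
  | Case u w => Case (msubst a (liftLe 0 e) u) (msubst a (liftLe 0 e) w)
  end.

Inductive step : term -> term -> Prop :=
| st_beta : forall u v, step (App (Lam u) (ETm v)) (subst0 v u)
| st_proj1 : forall t1 t2, step (App (Pair t1 t2) Proj1) t1
| st_proj2 : forall t1 t2, step (App (Pair t1 t2) Proj2) t2
| st_case1 : forall t u1 u2, step (App (Inj1 t) (Case u1 u2)) (subst0 t u1)
| st_case2 : forall t u1 u2, step (App (Inj2 t) (Case u1 u2)) (subst0 t u2)
| st_comm : forall t u1 u2 e,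
    step (App (App t (Case u1 u2)) e)
         (App t (Case (App u1 (liftLe 0 e)) (App u2 (liftLe 0 e))))
| st_mu : forall t e, step (App (Mu t) e) (Mu (msubst 0 (liftMe 0 e) t))
| st_lam : forall t t', step t t' -> step (Lam t) (Lam t')
| st_appl : forall t t' e, step t t' -> step (App t e) (App t' e)
| st_appr : forall t e e', estep e e' -> step (App t e) (App t e')
| st_pairl : forall t t' u, step t t' -> step (Pair t u) (Pair t' u)
| st_pairr : forall t u u', step u u' -> step (Pair t u) (Pair t u')
| st_inj1 : forall t t', step t t' -> step (Inj1 t) (Inj1 t')
| st_inj2 : forall t t', step t t' -> step (Inj2 t) (Inj2 t')
| st_mub : forall t t', step t t' -> step (Mu t) (Mu t')
| st_muapp : forall a t t', step t t' -> step (MuApp a t) (MuApp a t')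
with estep : eterm -> eterm -> Prop :=
| est_tm : forall t t', step t t' -> estep (ETm t) (ETm t')
| est_casel : forall u u' v, step u u' -> estep (Case u v) (Case u' v)
| est_caser : forall u v v', step v v' -> estep (Case u v) (Case u v').

(* strongly normalizable terms (the set N) and E-terms (the set N') *)
Definition SN (t : term) : Prop := Acc (fun y x => step x y) t.
Definition SNe (e : eterm) : Prop := Acc (fun y x => estep x y) e.

Definition tset := term -> Prop.
Definition same_set (A B : tset) : Prop := forall t, A t <-> B t.

Definition app_seq (t : term) (ws : list eterm) : term := fold_left App ws t.

Definition seq_arrow (S : list eterm -> Prop) (K : tset) : tset :=
  fun t => forall ws, S ws -> K (app_seq t ws).

Definition is_case (e : eterm) : Prop :=
  match e with Case _ _ => True | _ => False end.

(* a nice sequence: an element of N'^{<omega} none of whose entries except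
   possibly the last is of the form [x.u, y.v] *)
Definition nice_seq (ws : list eterm) : Prop :=
  Forall SNe ws /\
  forall i, S i < length ws -> ~ is_case (nth i ws Proj1).

Definition nice_set (X : list eterm -> Prop) : Prop :=
  forall ws, X ws -> nice_seq ws.

Definition arrow (K L : tset) : tset := fun t => forall u, K u -> L (App t (ETm u)).
Definition conj (K L : tset) : tset := fun t => K (App t Proj1) /\ L (App t Proj2).
(* K \/ L: the branch bodies u, v live under the binder of x (resp. y), i.e.
   index 0; u[x:=r] is subst0 r u. *)
Definition disj (K L : tset) : tset :=
  fun t => forall u v, SN u -> SN v ->
    (forall r, K r -> SN (subst0 r u)) ->
    (forall s, L s -> SN (subst0 s v)) ->
    SN (App t (Case u v)).

(* the family R: smallest set of sets of terms containing N and closed under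
   ->, /\, \/ (sets being identified up to extensional equality) *)
Inductive inR : tset -> Prop :=
| inR_N : inR SN
| inR_arrow : forall K L, inR K -> inR L -> inR (arrow K L)
| inR_conj : forall K L, inR K -> inR L -> inR (conj K L)
| inR_disj : forall K L, inR K -> inR L -> inR (disj K L)
| inR_ext : forall K K', inR K -> same_set K K' -> inR K'.

Definition Rperp (R : tset) : list eterm -> Prop :=
  fun ws => exists X, nice_set X /\ same_set R (seq_arrow X SN) /\ X ws.

(* Main.v *)
Require Import Defs.
From Stdlib Require Import List Arith Lia.
Import ListNotations.

Lemma SN_app_l : forall s, SN s -> forall t e, s = App t e -> SN t.
Proof.
  intros s H; induction H as [s _ IH]; intros t e ->.
  constructor; intros t' st. eapply IH; [apply st_appl; exact st | reflexivity].
Qed.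

Lemma SNe_tm : forall u, SN u -> SNe (ETm u).
Proof.
  intros u H; induction H as [u _ IH]; constructor; intros e' H.
  inversion H; subst; apply IH; assumption.
Qed.

Lemma SNe_p1 : SNe Proj1.
Proof. constructor; intros y H; inversion H. Qed.
Lemma SNe_p2 : SNe Proj2.
Proof. constructor; intros y H; inversion H. Qed.

Lemma SNe_case : forall u, SN u -> forall v, SN v -> SNe (Case u v).
Proof.
  intros u H; induction H as [u Hu IHu]; intros v Hv.
  induction Hv as [v Hv IHv]; constructor; intros e' H.
  inversion H; subst.
  - apply IHu; [assumption | constructor; assumption].
  - apply IHv; assumption.
Qed.

Fixpoint N0 (t : term) : Prop :=
  match t with
  | Var _ => True
  | App t' e => N0 t' /\ ~ is_case e
  | _ => False
  end.

Lemma N0_step : forall t t', step t t' -> N0 t -> N0 t'.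
Proof.
  intros t0 t0' H; induction H; simpl; intros HN; try tauto.
  - destruct HN as [HN Hc]; split; auto.
    inversion H; subst; simpl in *; auto.
Qed.

Lemma N0_SN_app : forall t, SN t -> N0 t -> forall e, SNe e -> SN (App t e).
Proof.
  intros t H; induction H as [t Ht IHt]; intros HN e He.
  induction He as [e He IHe]; constructor; intros y st.
  inversion st; subst; simpl in HN; try tauto.
  - apply IHt; auto. eapply N0_step; eauto. constructor; assumption.
  - apply IHe; assumption.
Qed.

Lemma nice_cons : forall w ws, nice_seq (w :: ws) ->
  SNe w /\ nice_seq ws /\ (ws <> [] -> ~ is_case w).
Proof.
  intros w ws [HF Hi]. inversion HF; subst. split; [assumption|split].
  - split; [assumption|]. intros i Hl. apply (Hi (S i)). simpl; lia.
  - intros Hne. apply (Hi 0). destruct ws; [congruence|simpl; lia].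
Qed.

Lemma N0_seq : forall ws t, nice_seq ws -> SN t -> N0 t -> SN (app_seq t ws).
Proof.
  induction ws as [|w ws IH]; intros t Hn Ht HN; simpl; auto.
  apply nice_cons in Hn as [Hw [Hn Hc]].
  destruct ws as [|w' ws'].
  - simpl. apply N0_SN_app; auto.
  - apply IH; auto.
    + apply N0_SN_app; auto.
    + simpl; split; auto. apply Hc; congruence.
Qed.

Lemma SN_var : forall n, SN (Var n).
Proof. intros n; constructor; intros y H; inversion H. Qed.

Lemma var_in : forall X, nice_set X -> seq_arrow X SN (Var 0).
Proof.
  intros X HX ws Hws. apply N0_seq; auto. apply SN_var. simpl; auto.
Qed.

Lemma key : forall R, inR R ->
  (exists X, nice_set X /\ same_set R (seq_arrow X SN)) /\ (forall t, R t -> SN t).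
Proof.
  intros R HR; induction HR.
  - split; [|auto]. exists (fun ws => ws = []). split.
    + intros ws ->. split; [constructor|]. intros i Hi; simpl in Hi; lia.
    + intros t; split.
      * intros H ws ->; exact H.
      * intros H; apply (H []); reflexivity.
  - destruct IHHR1 as [[XK [nK hK]] sK]. destruct IHHR2 as [[XL [nL hL]] sL].
    assert (KV : K (Var 0)) by (apply hK; apply var_in; auto).
    split.
    + exists (fun ws => exists u ws', ws = ETm u :: ws' /\ K u /\ XL ws'). split.
      * intros ws [u [ws' [-> [Ku Xw]]]]. destruct (nL _ Xw) as [HF Hi].
        split; [constructor; auto; apply SNe_tm; auto|].
        intros [|i] Hl; simpl; auto. apply Hi; simpl in Hl; lia.
      * intros t; split.
        -- intros H ws [u [ws' [-> [Ku Xw]]]]. simpl.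
           apply hL; auto.
        -- intros H u Ku. apply hL. intros ws' Xw.
           apply (H (ETm u :: ws')). eauto.
    + intros t H. eapply SN_app_l; [apply sL; apply H; exact KV | reflexivity].
  - destruct IHHR1 as [[XK [nK hK]] sK]. destruct IHHR2 as [[XL [nL hL]] sL].
    split.
    + exists (fun ws => exists ws', (ws = Proj1 :: ws' /\ XK ws') \/ (ws = Proj2 :: ws' /\ XL ws')).
      split.
      * intros ws [ws' [[-> Xw]|[-> Xw]]].
        -- destruct (nK _ Xw) as [HF Hi]. split; [constructor; auto; apply SNe_p1|].
           intros [|i] Hl; simpl; auto. apply Hi; simpl in Hl; lia.
        -- destruct (nL _ Xw) as [HF Hi]. split; [constructor; auto; apply SNe_p2|].
           intros [|i] Hl; simpl; auto. apply Hi; simpl in Hl; lia.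
      * intros t; split.
        -- intros [H1 H2] ws [ws' [[-> Xw]|[-> Xw]]]; simpl.
           ++ apply hK; auto.
           ++ apply hL; auto.
        -- intros H; split.
           ++ apply hK; intros ws' Xw; apply (H (Proj1 :: ws')); eauto.
           ++ apply hL; intros ws' Xw; apply (H (Proj2 :: ws')); eauto.
    + intros t [H1 _]. eapply SN_app_l; [apply sK; exact H1 | reflexivity].
  - destruct IHHR1 as [[XK [nK hK]] sK]. destruct IHHR2 as [[XL [nL hL]] sL].
    split.
    + exists (fun ws => exists u v, ws = [Case u v] /\ SN u /\ SN v /\
          (forall r, K r -> SN (subst0 r u)) /\ (forall s, L s -> SN (subst0 s v))).
      split.
      * intros ws [u [v [-> [Su [Sv _]]]]]. split.
        -- constructor; [apply SNe_case; auto|constructor].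
        -- intros i Hi; simpl in Hi; lia.
      * intros t; split.
        -- intros H ws [u [v [-> [Su [Sv [Hu Hv]]]]]]. simpl. apply H; auto.
        -- intros H u v Su Sv Hu Hv. apply (H [Case u v]). exists u, v; auto 10.
    + intros t H. eapply SN_app_l; [apply (H (Var 0) (Var 0)) | reflexivity];
        try apply SN_var; intros r Hr; unfold subst0; simpl; auto.
  - destruct IHHR as [[X [nX hX]] sX]. split.
    + exists X; split; auto. intros t; rewrite <- (H t); apply hX.
    + intros t Ht; apply sX; apply H; auto.
Qed.

Theorem lemma7 (R : tset) (HR : inR R) :
  nice_set (Rperp R) /\ same_set R (seq_arrow (Rperp R) SN).
Proof.
  split.
  - intros ws [X [nX [_ Xw]]]. apply nX; auto.
  - destruct (key R HR) as [[X0 [n0 h0]] _]. intros t; split.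
    + intros Ht ws [X [nX [hX Xw]]]. apply hX; auto.
    + intros H. apply h0. intros ws Xw. apply H. exists X0; auto.
Qed.
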